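(* Let $\rho$ be a density matrix on $\mathbb{C}^d$ with spectral decomposition $\rho=\sum_{i=1}^d p_i|i\rangle\langle i|$ (eigenvalues listed with multiplicity, including zeros), and $H$ a Hermitian operator on $\mathbb{C}^d$. Let $S=\{p_i+p_j:p_i\neq p_j\}$ and $$J=\{\mu\in S:\ \langle i|H|j\rangle=0\ \text{for all } i,j \text{ with } p_i\neq p_j \text{ and } p_i+p_j=\mu\}.$$ Then $n^*=\mathcal{N}[S]-\mathcal{N}[J]$, where $\mathcal{N}[\cdot]$ denotes the number of distinct elements of a set.
   Context: Let $\mathcal{R}_\rho(X)=\frac12(\rho X+X\rho)$ and define the Krylov subspaces $\mathcal{K}_n=\mathrm{span}\{i[\rho,H],\mathcal{R}_\rho(i[\rho,H]),\dots,\mathcal{R}_\rho^{n-1}(i[\rho,H])\}$ for $n\ge1$. These are nested and eventually stabilize; $n^*$ denotes the dimension of the stabilized subspace $\bigcup_n\mathcal{K}_n$. Equivalently, when $i[\rho,H]\ne0$, $\dim\mathcal{K}_n=n$ for $n\le n^*$ and $n^*$ is the smallest $n$ with $\mathcal{K}_n=\mathcal{K}_{n+1}$. *)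

(* Defs.v *)
From HB Require Import structures.
From mathcomp Require Import all_boot all_order all_algebra.
From mathcomp Require Import sesquilinear spectral.
Set Implicit Arguments. Unset Strict Implicit. Unset Printing Implicit Defensive.
Import Order.TTheory GRing.Theory Num.Theory.
Local Open Scope ring_scope.

(* Complex matrices: C is any numeric closed field (e.g. algC, or complex R). *)

Definition jordanR (C : numClosedFieldType) (d : nat) (rho X : 'M[C]_d) : 'M[C]_d :=
  2^-1 *: (rho *m X + X *m rho).

Definition icomm (C : numClosedFieldType) (d : nat) (rho H : 'M[C]_d) : 'M[C]_d :=
  'i *: (rho *m H - H *m rho).

(* Krylov subspace K_n = span { R^k (i[rho,H]) : k < n }, as a row space of
   vectorized matrices (mxalgebra). *)
Definition krylov (C : numClosedFieldType) (d : nat) (rho H : 'M[C]_d) (n : nat)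
  : 'M[C]_(d * d) :=
  (\sum_(k < n) <<mxvec (iter k (jordanR rho) (icomm rho H))>>)%MS.

(* m is the dimension of the stabilized subspace \bigcup_n K_n: since the K_n are
   nested, this is the supremum of their dimensions. *)
Definition krylov_stable_dim (C : numClosedFieldType) (d : nat) (rho H : 'M[C]_d)
  (m : nat) : Prop :=
  (forall n, \rank (krylov rho H n) <= m)%N /\ exists n, \rank (krylov rho H n) = m.

Definition setS (C : numClosedFieldType) (d : nat) (p : 'I_d -> C) : seq C :=
  undup [seq p ij.1 + p ij.2 | ij <- enum [pred ij : 'I_d * 'I_d | p ij.1 != p ij.2]].

(* J = { mu in S : <i|H|j> = 0 whenever p_i <> p_j and p_i + p_j = mu },
   where Hb i j = <i|H|j> is the matrix of H in the eigenbasis of rho. *)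
Definition setJ (C : numClosedFieldType) (d : nat) (p : 'I_d -> C) (Hb : 'M[C]_d)
  : seq C :=
  [seq mu <- setS p |
     [forall i : 'I_d, forall j : 'I_d,
        ((p i != p j) && (p i + p j == mu)) ==> (Hb i j == 0)]].

(* Main.v *)
Require Import Defs.
From HB Require Import structures.
From mathcomp Require Import all_boot all_order all_algebra.
From mathcomp Require Import sesquilinear spectral.
From mathcomp Require Import ring.
Import Order.TTheory GRing.Theory Num.Theory.
Local Open Scope ring_scope.
Local Open Scope sesquilinear_scope.

Lemma rank_sum_rows (F : fieldType) (n m : nat) (A : 'M[F]_(n, m)) :
  \rank (\sum_(k < n) <<row k A>>)%MS = \rank A.
Proof.
apply/eqP; rewrite eqn_leq; apply/andP; split; apply: mxrankS.
  by apply/sumsmx_subP => k _; rewrite genmxE row_sub.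
by apply/row_subP => k; rewrite (sumsmx_sup k) // genmxE.
Qed.

Lemma rank_conj (C : numClosedFieldType) (d n : nat) (V : 'M[C]_d) (A : 'M[C]_(n, d * d)) :
  V *m V^t* = 1%:M ->
  \rank (A *m lin_mx (mulmxr V \o mulmx (V^t*))) = \rank A.
Proof.
move=> hVU; apply/eqP; rewrite eqn_leq; apply/andP; split; first exact: mxrankM_maxl.
have eA : A = A *m lin_mx (mulmxr V \o mulmx (V^t*)) *m lin_mx (mulmxr (V^t*) \o mulmx V).
  apply/row_matrixP => k; rewrite !row_mul !mul_rV_lin /= mxvecK.
  by rewrite !mulmxA hVU mul1mx -mulmxA hVU mulmx1 vec_mxK.
rewrite {1}eA; exact: mxrankM_maxl.
Qed.

Definition cc (C : numClosedFieldType) (d : nat) (p : 'I_d -> C) (Hb : 'M[C]_d) i j :=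
  'i * (p i - p j) * Hb i j.
Arguments cc {C d}.

Definition Yk (C : numClosedFieldType) (d : nat) (p : 'I_d -> C) (Hb : 'M[C]_d) k :
  'M[C]_d := \matrix_(i, j) (((p i + p j) / 2) ^+ k * cc p Hb i j).
Arguments Yk {C d}.

Lemma Y_iter (C : numClosedFieldType) (d : nat) (rho H V : 'M[C]_d) (p : 'I_d -> C) k :
  V^t* *m V = 1%:M ->
  rho = V *m diag_mx (\row_i p i) *m V ^t* ->
  V^t* *m iter k (jordanR rho) (icomm rho H) *m V = Yk p (V^t* *m H *m V) k.
Proof.
move=> hUV erho.
have e n (M : 'M_(n, d)) : M *m V^t* *m V = M by rewrite -mulmxA hUV mulmx1.
set D := diag_mx (\row_i p i).
elim: k => [|k IH] /=.
  have -> : V^t* *m icomm rho H *m V = 'i *: (D *m (V^t* *m H *m V) - (V^t* *m H *m V) *m D).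
    rewrite /icomm -scalemxAr -scalemxAl mulmxBr mulmxBl erho.
    by congr (_ *: (_ - _)); rewrite !mulmxA ?hUV ?mul1mx ?e.
  move: (V^t* *m H *m V) => Hb.
  rewrite mul_diag_mx mul_mx_diag; apply/matrixP => i j; rewrite !mxE /cc.
  rewrite expr0 mul1r; ring.
set X := iter k _ _.
have -> : V^t* *m jordanR rho X *m V = 2^-1 *: (D *m (V^t* *m X *m V) + (V^t* *m X *m V) *m D).
  rewrite /jordanR -scalemxAr -scalemxAl mulmxDr mulmxDl erho.
  by congr (_ *: (_ + _)); rewrite !mulmxA ?hUV ?mul1mx ?e.
rewrite IH /Yk; move: (V^t* *m H *m V) => Hb.
rewrite mul_diag_mx mul_mx_diag; apply/matrixP => i j; rewrite !mxE exprS.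
rewrite /cc; ring.
Qed.

Definition Tl (C : numClosedFieldType) (d : nat) (p : 'I_d -> C) (Hb : 'M[C]_d) : seq C :=
  undup [seq p ij.1 + p ij.2 | ij <- enum [pred ij : 'I_d * 'I_d | cc p Hb ij.1 ij.2 != 0]].
Arguments Tl {C d}.

Lemma memTl (C : numClosedFieldType) (d : nat) (p : 'I_d -> C) (Hb : 'M[C]_d) mu :
  reflect (exists i j, cc p Hb i j != 0 /\ p i + p j = mu) (mu \in Tl p Hb).
Proof.
rewrite mem_undup; apply: (iffP mapP) => [[[i j]] /= |[i [j [h1 h2]]]].
  by rewrite mem_enum inE /= => h ->; exists i, j.
by exists (i, j); rewrite // mem_enum inE.
Qed.

Definition Bm (C : numClosedFieldType) (d : nat) (p : 'I_d -> C) (Hb : 'M[C]_d)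
  : 'M[C]_(size (Tl p Hb), d * d) :=
  \matrix_(l < size (Tl p Hb))
     mxvec (\matrix_(i, j) (if p i + p j == (Tl p Hb)`_l then cc p Hb i j else 0)).
Arguments Bm {C d}.

Definition av (C : numClosedFieldType) (d : nat) (p : 'I_d -> C) (Hb : 'M[C]_d)
  : 'rV[C]_(size (Tl p Hb)) := \row_l ((Tl p Hb)`_l / 2).
Arguments av {C d}.

Lemma Yk_vand (C : numClosedFieldType) (d : nat) (p : 'I_d -> C) (Hb : 'M[C]_d) n :
  \matrix_(k < n) mxvec (Yk p Hb k) = Vandermonde n (av p Hb) *m Bm p Hb.
Proof.
apply/matrixP => k ij; case/mxvec_indexP: ij => i j.
rewrite !mxE mxvecE mxE.
have [c0|cn0] := eqVneq (cc p Hb i j) 0.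
  rewrite c0 mulr0 big1 // => l _; rewrite !mxE mxvecE mxE. case: ifP => _; by rewrite ?c0 mulr0.
have hT : p i + p j \in Tl p Hb by apply/memTl; exists i, j.
have hl : (index (p i + p j)%R (Tl p Hb) < size (Tl p Hb))%N by rewrite index_mem.
rewrite (bigD1 (Ordinal hl)) //= big1 ?addr0.
  by rewrite !mxE mxvecE mxE /= nth_index ?eqxx.
move=> l hl'; rewrite !mxE mxvecE mxE.
case: ifP => [/eqP he|]; last by rewrite mulr0.
exfalso; move/eqP: hl'; apply; apply: val_inj => /=.
by rewrite he index_uniq // undup_uniq.
Qed.

Lemma Bm_free (C : numClosedFieldType) (d : nat) (p : 'I_d -> C) (Hb : 'M[C]_d) :
  row_free (Bm p Hb).
Proof.
have hu : uniq (Tl p Hb) by rewrite undup_uniq.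
have hk : kermx (Bm p Hb) == 0.
  apply/rowV0P => u /sub_kermxP hu0; apply/rowP => l; rewrite mxE.
  have : (Tl p Hb)`_l \in Tl p Hb by rewrite mem_nth.
  case/memTl => i [j [cn e]].
  have := congr1 (fun M : 'M[C]_(1, d * d) => M 0 (mxvec_index i j)) hu0; rewrite !mxE.
  rewrite (bigD1 l) //= big1 ?addr0.
    rewrite !mxE mxvecE mxE e eqxx => /eqP; rewrite mulf_eq0 (negPf cn) orbF.
    by move/eqP.
  move=> l' hl'; rewrite !mxE mxvecE mxE e nth_uniq // ?ltn_ord //.
  case: (eqVneq (l : nat) l') => [h|_]; last by rewrite mulr0.
  by move: hl'; rewrite (val_inj h) eqxx.
rewrite /row_free eqn_leq rank_leq_row /= -subn_eq0 -mxrank_ker (eqP hk) mxrank0.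
by [].
Qed.

Lemma vand_unit (C : numClosedFieldType) (d : nat) (p : 'I_d -> C) (Hb : 'M[C]_d) :
  Vandermonde (size (Tl p Hb)) (av p Hb) \in unitmx.
Proof.
have hu : uniq (Tl p Hb) by rewrite undup_uniq.
rewrite unitmxE det_Vandermonde unitfE.
apply/prodf_neq0 => i _; apply/prodf_neq0 => j hij; rewrite !mxE subr_eq0.
have h2 : (2 : C) != 0 by rewrite pnatr_eq0.
apply/negP => /eqP h.
have : (Tl p Hb)`_j = (Tl p Hb)`_i.
  by rewrite -(divfK h2 ((Tl p Hb)`_j)) h divfK.
move/eqP; rewrite nth_uniq // ?ltn_ord // => /eqP hij'.
by move: hij; rewrite hij' ltnn.
Qed.

Lemma size_filterC (T : eqType) (a : pred T) (s : seq T) :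
  (size s - size (filter a s))%N = size (filter (predC a) s).
Proof. by rewrite !size_filter -(count_predC a s) addKn. Qed.

Lemma count_SJ (C : numClosedFieldType) (d : nat) (p : 'I_d -> C) (Hb : 'M[C]_d) :
  (size (setS p) - size (setJ p Hb))%N = size (Tl p Hb).
Proof.
rewrite /setJ size_filterC; apply: perm_size; apply: uniq_perm.
- by rewrite filter_uniq // undup_uniq.
- by rewrite undup_uniq.
move=> mu; rewrite mem_filter /=; apply/idP/idP.
  case/andP => /forallPn [i] /forallPn [j]; rewrite negb_imply.
  case/andP => /andP [hne /eqP he] hb _.
  by apply/memTl; exists i, j; split => //; rewrite /cc !mulf_neq0 ?neq0Ci ?subr_eq0.
case/memTl => i [j [cn e]].
move: cn; rewrite /cc !mulf_eq0 !negb_or subr_eq0 => /andP [/andP [_ hne] hb].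
apply/andP; split.
  by apply/forallPn; exists i; apply/forallPn; exists j; rewrite negb_imply hne e eqxx hb.
rewrite /setS mem_undup; apply/mapP; exists (i, j); last by rewrite e.
by rewrite mem_enum inE /= hne.
Qed.

Theorem mainTheorem3 (C : numClosedFieldType) (d : nat)
  (rho H V : 'M[C]_d) (p : 'I_d -> C) :
  V \is unitarymx ->
  (forall i, 0 <= p i) ->
  \sum_i p i = 1 ->
  rho = V *m diag_mx (\row_i p i) *m V ^t* ->
  H ^t* = H ->
  krylov_stable_dim rho H
    (size (setS p) - size (setJ p (V ^t* *m H *m V)))%N.
Proof.
move=> hV _ _ erho _.
have hVU : V *m V^t* = 1%:M by apply/unitarymxP.
have hUV : V^t* *m V = 1%:M by rewrite -invmx_unitary // mulVmx // unitarymx_unit.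
rewrite count_SJ.
have key n : \rank (krylov rho H n) = \rank (Vandermonde n (av p (V ^t* *m H *m V))).
  rewrite /krylov.
  have -> : (\sum_(k < n) <<mxvec (iter k (jordanR rho) (icomm rho H))>>)%MS =
            (\sum_(k < n) <<row k (\matrix_(k < n) mxvec (iter k (jordanR rho) (icomm rho H)))>>)%MS.
    by apply: eq_bigr => k _; rewrite rowK.
  rewrite rank_sum_rows -(@rank_conj C d n V _ hVU).
  have -> : (\matrix_(k < n) mxvec (iter k (jordanR rho) (icomm rho H))) *m
              lin_mx (mulmxr V \o mulmx (V^t*)) = \matrix_(k < n) mxvec (Yk p (V ^t* *m H *m V) k).
    apply/row_matrixP => k; rewrite row_mul !rowK mul_vec_lin /=.
    by rewrite -(@Y_iter C d rho H V p k hUV erho).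
  by rewrite Yk_vand mxrankMfree // Bm_free.
split; first by move=> n; rewrite key rank_leq_col.
by exists (size (Tl p (V ^t* *m H *m V))); rewrite key mxrank_unit // vand_unit.
Qed.
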